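(* Let $X$ be a topological space and $Y$ be a metrizable space. Then $$\mathrm{B}_1(X,Y)\subseteq \Sigma^{f*}_0(X,Y)=\mathrm{K}_1(X,Y)\cap\Sigma^f(X,Y).$$
   Context: A subset of $X$ is functionally closed (functionally open) if it is of the form $\varphi^{-1}(0)$ (resp. $X\setminus\varphi^{-1}(0)$) for some continuous $\varphi:X\to[0,1]$. A functionally $F_\sigma$-set is a countable union of functionally closed sets; a functionally $G_\delta$-set is a countable intersection of functionally open sets. $\mathrm{B}_1(X,Y)$ is the set of mappings $f:X\to Y$ that are pointwise limits of sequences of continuous mappings $X\to Y$. $\mathrm{K}_1(X,Y)$ is the set of mappings $f:X\to Y$ such that $f^{-1}(V)$ is a functionally $F_\sigma$-set in $X$ for every open $V\subseteq Y$. A family $(A_i:i\in I)$ of subsets of $X$ is strongly functionally discrete (sfd) if there is a discrete family $(U_i:i\in I)$ of functionally open subsets of $X$ with $\overline{A_i}\subseteq U_i$ for all $i$ (a family is discrete if every point has a neighborhood meeting at most one member). A family is $\sigma$-sfd if it is a countable union of sfd families. A family $\mathcal B$ of subsets of $X$ is a base for $f:X\to Y$ if for every open $V\subseteq Y$, $f^{-1}(V)$ is a union of members of $\mathcal B$. $\Sigma^f(X,Y)$ is the set of mappings $f:X\to Y$ having a $\sigma$-sfd base; $\Sigma^{f*}_0(X,Y)$ is the set of mappings $f:X\to Y$ having a $\sigma$-sfd base consisting of functionally closed subsets of $X$. *)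

(* Defs.v *)
From Stdlib Require Export Reals.
Open Scope R_scope.

Definition set (X : Type) := X -> Prop.

Record Topology (X : Type) := {
  is_open : set X -> Prop;
  open_full : is_open (fun _ => True);
  open_inter : forall U V, is_open U -> is_open V -> is_open (fun x => U x /\ V x);
  open_union : forall F : set (set X), (forall U, F U -> is_open U) ->
                 is_open (fun x => exists U, F U /\ U x)
}.
Arguments is_open {X} _ _.

Definition R_open (V : set R) : Prop :=
  forall r, V r -> exists eps, 0 < eps /\ forall s, Rabs (s - r) < eps -> V s.

Definition continuous {X Y : Type} (TX : Topology X) (TY : Topology Y) (f : X -> Y) : Prop :=
  forall V, is_open TY V -> is_open TX (fun x => V (f x)).

Definition continuous_R {X : Type} (TX : Topology X) (phi : X -> R) : Prop :=
  forall V, R_open V -> is_open TX (fun x => V (phi x)).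

Definition cont01 {X : Type} (TX : Topology X) (phi : X -> R) : Prop :=
  continuous_R TX phi /\ forall x, 0 <= phi x <= 1.

Definition func_closed {X : Type} (TX : Topology X) (A : set X) : Prop :=
  exists phi, cont01 TX phi /\ forall x, A x <-> phi x = 0.

Definition func_open {X : Type} (TX : Topology X) (A : set X) : Prop :=
  exists phi, cont01 TX phi /\ forall x, A x <-> phi x <> 0.

Definition func_Fsigma {X : Type} (TX : Topology X) (A : set X) : Prop :=
  exists F : nat -> set X, (forall n, func_closed TX (F n)) /\
    forall x, A x <-> exists n, F n x.

Definition closure {X : Type} (TX : Topology X) (A : set X) : set X :=
  fun x => forall W, is_open TX W -> W x -> exists y, W y /\ A y.

Definition metrizable {Y : Type} (TY : Topology Y) : Prop :=
  exists d : Y -> Y -> R,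
    (forall x y, d x y = 0 <-> x = y) /\
    (forall x y, d x y = d y x) /\
    (forall x y z, d x z <= d x y + d y z) /\
    (forall U, is_open TY U <->
       forall y, U y -> exists eps, 0 < eps /\ forall z, d y z < eps -> U z).

Definition pointwise_limit {X Y : Type} (TY : Topology Y)
  (fn : nat -> X -> Y) (f : X -> Y) : Prop :=
  forall x V, is_open TY V -> V (f x) ->
    exists N, forall n, (N <= n)%nat -> V (fn n x).

Definition Baire1 {X Y : Type} (TX : Topology X) (TY : Topology Y) (f : X -> Y) : Prop :=
  exists fn : nat -> X -> Y, (forall n, continuous TX TY (fn n)) /\ pointwise_limit TY fn f.

Definition K1 {X Y : Type} (TX : Topology X) (TY : Topology Y) (f : X -> Y) : Prop :=
  forall V, is_open TY V -> func_Fsigma TX (fun x => V (f x)).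

Definition discrete_family {X I : Type} (TX : Topology X) (U : I -> set X) : Prop :=
  forall x, exists W, is_open TX W /\ W x /\
    forall i j, (exists y, W y /\ U i y) -> (exists y, W y /\ U j y) -> i = j.

Definition sfd {X I : Type} (TX : Topology X) (A : I -> set X) : Prop :=
  exists U : I -> set X,
    (forall i, func_open TX (U i)) /\ discrete_family TX U /\
    forall i x, closure TX (A i) x -> U i x.

Definition sigma_sfd {X I : Type} (TX : Topology X) (A : I -> set X) : Prop :=
  exists c : I -> nat, forall n : nat,
    sfd TX (fun i : {i : I | c i = n} => A (proj1_sig i)).

Definition base_for {X Y I : Type} (TY : Topology Y) (B : I -> set X) (f : X -> Y) : Prop :=
  forall V, is_open TY V ->
    forall x, V (f x) <-> exists i, B i x /\ forall z, B i z -> V (f z).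

Definition SigmaF {X Y : Type} (TX : Topology X) (TY : Topology Y) (f : X -> Y) : Prop :=
  exists (I : Type) (B : I -> set X), sigma_sfd TX B /\ base_for TY B f.

Definition SigmaF0star {X Y : Type} (TX : Topology X) (TY : Topology Y) (f : X -> Y) : Prop :=
  exists (I : Type) (B : I -> set X), sigma_sfd TX B /\ base_for TY B f /\
    forall i, func_closed TX (B i).

(* Main.v *)
Require Import Defs.
From Stdlib Require Import Lra Lia Classical ClassicalEpsilon FunctionalExtensionality PropExtensionality ProofIrrelevance Cantor.

Lemma set_ext {X : Type} (A B : set X) : (forall x, A x <-> B x) -> A = B.
Proof.
  intros H; apply functional_extensionality; intros x; apply propositional_extensionality; apply H.
Qed.

Lemma open_ext {X} (T : Topology X) (A B : set X) :
  is_open T A -> (forall x, A x <-> B x) -> is_open T B.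
Proof. intros HA H; rewrite <- (set_ext A B H); exact HA. Qed.

Lemma open_local {X} (T : Topology X) (A : set X) :
  (forall x, A x -> exists W, is_open T W /\ W x /\ forall z, W z -> A z) -> is_open T A.
Proof.
  intros H.
  apply open_ext with (A := fun x => exists U, (is_open T U /\ forall z, U z -> A z) /\ U x).
  - apply open_union. intros U [HU _]; exact HU.
  - intros x; split.
    + intros [U [[_ HU] Ux]]; auto.
    + intros Ax; destruct (H x Ax) as [W [HW [Wx HWA]]]; exists W; auto.
Qed.

Lemma R_open_ball (c e : R) : R_open (fun s => Rabs (s - c) < e).
Proof.
  intros r Hr. exists (e - Rabs (r - c)); split; [lra|].
  intros s Hs.
  assert (Rabs (s - c) <= Rabs (s - r) + Rabs (r - c)).
  { replace (s - c) with ((s - r) + (r - c)) by ring. apply Rabs_triang. }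
  lra.
Qed.

Lemma R_open_lt (c : R) : R_open (fun s => s < c).
Proof.
  intros r Hr. exists (c - r); split; [lra|].
  intros s Hs. pose proof (Rle_abs (s - r)). lra.
Qed.

Lemma cont_local {X} (T : Topology X) (h : X -> R) :
  (forall x eps, 0 < eps -> exists W, is_open T W /\ W x /\
      forall z, W z -> Rabs (h z - h x) < eps) -> continuous_R T h.
Proof.
  intros H V HV. apply open_local. intros x Vx.
  destruct (HV _ Vx) as [e [He HVe]].
  destruct (H x e He) as [W [HW [Wx HWe]]].
  exists W; repeat split; auto.
Qed.

Lemma local_cont {X} (T : Topology X) (h : X -> R) :
  continuous_R T h -> forall x eps, 0 < eps -> exists W, is_open T W /\ W x /\
      forall z, W z -> Rabs (h z - h x) < eps.
Proof.
  intros H x e He. exists (fun z => Rabs (h z - h x) < e).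
  repeat split; auto.
  - apply (H (fun s => Rabs (s - h x) < e)). apply R_open_ball.
  - simpl. replace (h x - h x) with 0 by ring. rewrite Rabs_R0; auto.
Qed.

Lemma cont_agree {X} (T : Topology X) (h : X -> R) :
  (forall x, exists W g, is_open T W /\ W x /\ continuous_R T g /\ forall z, W z -> h z = g z)
  -> continuous_R T h.
Proof.
  intros H. apply cont_local. intros x e He.
  destruct (H x) as [W [g [HW [Wx [Hg Hz]]]]].
  destruct (local_cont T g Hg x e He) as [W' [HW' [W'x HW'e]]].
  exists (fun z => W z /\ W' z). repeat split; auto.
  - apply open_inter; auto.
  - intros z [Wz W'z]. rewrite (Hz z Wz), (Hz x Wx). auto.
Qed.

Lemma cont_const {X} (T : Topology X) (a : R) : continuous_R T (fun _ => a).
Proof.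
  apply cont_local. intros x e He. exists (fun _ => True). repeat split; auto.
  - apply open_full.
  - intros z _. replace (a - a) with 0 by ring. rewrite Rabs_R0; auto.
Qed.

Lemma cont_comp1 {X} (T : Topology X) (h : X -> R) (F : R -> R) (K : R) :
  0 < K -> (forall a b, Rabs (F a - F b) <= K * Rabs (a - b)) ->
  continuous_R T h -> continuous_R T (fun x => F (h x)).
Proof.
  intros HK HF Hh. apply cont_local. intros x e He.
  destruct (local_cont T h Hh x (e / K)) as [W [HW [Wx HWe]]].
  { apply Rdiv_lt_0_compat; auto. }
  exists W; repeat split; auto. intros z Wz.
  specialize (HWe z Wz). specialize (HF (h z) (h x)).
  assert (K * Rabs (h z - h x) < K * (e / K)) by (apply Rmult_lt_compat_l; auto).
  replace (K * (e / K)) with e in H by (field; lra). lra.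
Qed.

Lemma cont_comp2 {X} (T : Topology X) (h1 h2 : X -> R) (F : R -> R -> R) (K : R) :
  0 < K -> (forall a b a' b', Rabs (F a b - F a' b') <= K * (Rabs (a - a') + Rabs (b - b'))) ->
  continuous_R T h1 -> continuous_R T h2 -> continuous_R T (fun x => F (h1 x) (h2 x)).
Proof.
  intros HK HF H1 H2. apply cont_local. intros x e He.
  assert (He' : 0 < e / (2 * K)) by (apply Rdiv_lt_0_compat; lra).
  destruct (local_cont T h1 H1 x _ He') as [W1 [HW1 [W1x HW1e]]].
  destruct (local_cont T h2 H2 x _ He') as [W2 [HW2 [W2x HW2e]]].
  exists (fun z => W1 z /\ W2 z); repeat split; auto.
  - apply open_inter; auto.
  - intros z [Wz1 Wz2]. specialize (HW1e z Wz1). specialize (HW2e z Wz2).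
    specialize (HF (h1 z) (h2 z) (h1 x) (h2 x)).
    assert (K * (Rabs (h1 z - h1 x) + Rabs (h2 z - h2 x)) < K * (e / (2 * K) + e / (2*K)))
      by (apply Rmult_lt_compat_l; lra).
    replace (K * (e / (2 * K) + e / (2 * K))) with e in H by (field; lra). lra.
Qed.

Lemma Rmax_lip a b a' b' : Rabs (Rmax a b - Rmax a' b') <= 1 * (Rabs (a - a') + Rabs (b - b')).
Proof.
  unfold Rmax; destruct (Rle_dec a b); destruct (Rle_dec a' b');
  repeat (match goal with |- context [Rabs ?t] => destruct (Rcase_abs t) ; [rewrite (Rabs_left t) by lra | rewrite (Rabs_right t) by lra] end); lra.
Qed.

Lemma Rmin_lip a b a' b' : Rabs (Rmin a b - Rmin a' b') <= 1 * (Rabs (a - a') + Rabs (b - b')).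
Proof.
  unfold Rmin; destruct (Rle_dec a b); destruct (Rle_dec a' b');
  repeat (match goal with |- context [Rabs ?t] => destruct (Rcase_abs t) ; [rewrite (Rabs_left t) by lra | rewrite (Rabs_right t) by lra] end); lra.
Qed.
Section Inf.
Context {J : Type} (g : J -> R).
Definition infE : R -> Prop := fun t => t = -1 \/ exists j, t = - Rmax 0 (g j).
Lemma infE_bound : bound infE.
Proof.
  exists 0. intros t [-> | [j ->]]; [lra|]. pose proof (Rmax_l 0 (g j)); lra.
Qed.
Lemma infE_ne : exists t, infE t.
Proof. exists (-1); left; reflexivity. Qed.
Definition inf01 : R := - proj1_sig (completeness infE infE_bound infE_ne).

Lemma inf01_spec : is_lub infE (- inf01).
Proof. unfold inf01. rewrite Ropp_involutive. apply (proj2_sig (completeness _ _ _)). Qed.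

Lemma inf01_ge0 : 0 <= inf01.
Proof.
  destruct inf01_spec as [_ H].
  assert (- inf01 <= 0); [|lra]. apply H.
  intros t [-> | [j ->]]; [lra|]. pose proof (Rmax_l 0 (g j)); lra.
Qed.
Lemma inf01_le1 : inf01 <= 1.
Proof.
  destruct inf01_spec as [H _]. assert (-1 <= - inf01); [|lra]. apply H. left; auto.
Qed.
Lemma inf01_le j : inf01 <= Rmax 0 (g j).
Proof.
  destruct inf01_spec as [H _]. assert (- Rmax 0 (g j) <= - inf01); [|lra]. apply H. right; eauto.
Qed.
Lemma inf01_glb t : t <= 1 -> (forall j, t <= Rmax 0 (g j)) -> t <= inf01.
Proof.
  intros H1 H2. destruct inf01_spec as [_ H].
  assert (- inf01 <= - t); [|lra]. apply H.
  intros u [-> | [j ->]]; [lra|]. specialize (H2 j); lra.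
Qed.
Lemma inf01_lt t : inf01 < t -> t <= 1 -> exists j, g j < t.
Proof.
  intros H1 H2. apply NNPP. intros Hn.
  assert (t <= inf01); [|lra]. apply inf01_glb; auto.
  intros j. assert (~ g j < t) by (intro; apply Hn; eauto).
  pose proof (Rmax_r 0 (g j)); lra.
Qed.
End Inf.

Lemma inf01_lip {J} (g g' : J -> R) (delta : R) : 0 <= delta ->
  (forall j, Rabs (g j - g' j) <= delta) -> inf01 g <= inf01 g' + delta.
Proof.
  intros Hd H. assert (inf01 g - delta <= inf01 g'); [|lra].
  apply inf01_glb.
  - pose proof (inf01_le1 g); lra.
  - intros j. pose proof (inf01_le g j). specialize (H j).
    pose proof (Rmax_lip 0 (g j) 0 (g' j)).
    assert (Rmax 0 (g j) - Rmax 0 (g' j) <= Rabs (g j - g' j)).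
    { pose proof (Rle_abs (Rmax 0 (g j) - Rmax 0 (g' j))).
      replace (Rabs (0 - 0)) with 0 in H1 by (rewrite Rminus_0_r, Rabs_R0; auto). lra. }
    lra.
Qed.

Lemma inf01_lip_abs {J} (g g' : J -> R) (delta : R) : 0 <= delta ->
  (forall j, Rabs (g j - g' j) <= delta) -> Rabs (inf01 g - inf01 g') <= delta.
Proof.
  intros Hd H. pose proof (inf01_lip g g' delta Hd H).
  assert (inf01 g' <= inf01 g + delta).
  { apply inf01_lip; auto. intros j; rewrite Rabs_minus_sym; auto. }
  apply Rabs_le; split; lra.
Qed.

Lemma inf01_single {J} (g : J -> R) (j0 : J) :
  (forall j, j <> j0 -> g j = 1) -> 0 <= g j0 <= 1 -> inf01 g = g j0.
Proof.
  intros H [H0 H1]. apply Rle_antisym.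
  - pose proof (inf01_le g j0). rewrite Rmax_right in H2; auto.
  - apply inf01_glb; auto. intros j. destruct (classic (j = j0)) as [->|Hn].
    + rewrite Rmax_right; lra.
    + rewrite (H j Hn). rewrite Rmax_right; lra.
Qed.

Lemma inf01_all1 {J} (g : J -> R) : (forall j, g j = 1) -> inf01 g = 1.
Proof.
  intros H. apply Rle_antisym; [apply inf01_le1|].
  apply inf01_glb; [lra|]. intros j; rewrite H, Rmax_right; lra.
Qed.

Definition sup01 {J} (g : J -> R) : R := 1 - inf01 (fun j => 1 - g j).

Lemma sup01_bounds {J} (g : J -> R) : 0 <= sup01 g <= 1.
Proof. unfold sup01. pose proof (inf01_ge0 (fun j => 1 - g j)). pose proof (inf01_le1 (fun j => 1 - g j)). lra. Qed.

Lemma sup01_ge {J} (g : J -> R) j : Rmin 1 (g j) <= sup01 g.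
Proof.
  unfold sup01. pose proof (inf01_le (fun j => 1 - g j) j). simpl in H.
  unfold Rmin, Rmax in *. destruct (Rle_dec 1 (g j)); destruct (Rle_dec 0 (1 - g j)); lra.
Qed.

Lemma sup01_lub {J} (g : J -> R) t : 0 <= t -> (forall j, Rmin 1 (g j) <= t) -> sup01 g <= t.
Proof.
  intros H0 H. unfold sup01. assert (1 - t <= inf01 (fun j => 1 - g j)); [|lra].
  destruct (Rle_dec t 1).
  - apply inf01_glb; [lra|]. intros j. specialize (H j).
    unfold Rmin, Rmax in *. destruct (Rle_dec 1 (g j)); destruct (Rle_dec 0 (1 - g j)); lra.
  - pose proof (inf01_ge0 (fun j => 1 - g j)); lra.
Qed.

Lemma sup01_lip_abs {J} (g g' : J -> R) (delta : R) : 0 <= delta ->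
  (forall j, Rabs (g j - g' j) <= delta) -> Rabs (sup01 g - sup01 g') <= delta.
Proof.
  intros Hd H. unfold sup01.
  replace (1 - inf01 (fun j => 1 - g j) - (1 - inf01 (fun j => 1 - g' j)))
    with (- (inf01 (fun j => 1 - g j) - inf01 (fun j => 1 - g' j))) by ring.
  rewrite Rabs_Ropp. apply inf01_lip_abs; auto.
  intros j. replace (1 - g j - (1 - g' j)) with (- (g j - g' j)) by ring.
  rewrite Rabs_Ropp; auto.
Qed.
Definition w (n : nat) : R := / INR (S n).

Lemma INRS_pos n : 0 < INR (S n).
Proof. apply lt_0_INR; lia. Qed.

Lemma w_pos n : 0 < w n.
Proof. unfold w; apply Rinv_0_lt_compat, INRS_pos. Qed.

Lemma w_le1 n : w n <= 1.
Proof.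
  unfold w. rewrite <- Rinv_1. apply Rinv_le_contravar; [lra|].
  rewrite S_INR. pose proof (pos_INR n); lra.
Qed.

Lemma w_mono n m : (n <= m)%nat -> w m <= w n.
Proof.
  intros H. unfold w. apply Rinv_le_contravar; [apply INRS_pos|]. apply le_INR; lia.
Qed.

Lemma w_small e : 0 < e -> exists m, w m < e.
Proof.
  intros He. destruct (INR_archimed e 1 He) as [n Hn]. exists n. unfold w.
  assert (INR n <= INR (S n)) by (apply le_INR; lia).
  pose proof (INRS_pos n).
  apply (Rmult_lt_reg_l (INR (S n))); auto. rewrite Rinv_r by lra. nra.
Qed.

Lemma w_arch t : 0 < t -> exists k, 1 <= INR (S k) * t.
Proof.
  intros Ht. destruct (w_small t Ht) as [k Hk]. exists k. unfold w in Hk.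
  pose proof (INRS_pos k).
  apply (Rmult_lt_compat_l (INR (S k))) in Hk; auto. rewrite Rinv_r in Hk by lra. lra.
Qed.

Section FC.
Context {X : Type} (T : Topology X).

Lemma cont01_ext (p : X -> R) (A : set X) : cont01 T p -> (forall x, A x <-> p x = 0) -> func_closed T A.
Proof. intros H1 H2; exists p; auto. Qed.

Lemma fc_inter (A B : set X) : func_closed T A -> func_closed T B -> func_closed T (fun x => A x /\ B x).
Proof.
  intros [p [[Hp Hp1] HA]] [q [[Hq Hq1] HB]].
  exists (fun x => Rmax (p x) (q x)). split; [split|].
  - apply (cont_comp2 T p q Rmax 1); auto; [lra| apply Rmax_lip].
  - intros x. specialize (Hp1 x); specialize (Hq1 x). unfold Rmax; destruct (Rle_dec (p x) (q x)); lra.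
  - intros x. rewrite HA, HB. specialize (Hp1 x); specialize (Hq1 x).
    unfold Rmax; destruct (Rle_dec (p x) (q x)); split; intros; try lra.
Qed.

Lemma fc_ge (psi : X -> R) (K : R) : 0 < K -> cont01 T psi -> func_closed T (fun x => 1 <= K * psi x).
Proof.
  intros HK [Hc Hb].
  exists (fun x => Rmax 0 (1 - K * psi x)). split; [split|].
  - apply (cont_comp1 T psi (fun a => Rmax 0 (1 - K * a)) K); auto.
    intros a b. pose proof (Rmax_lip 0 (1 - K * a) 0 (1 - K * b)).
    replace (1 - K * a - (1 - K * b)) with (K * (b - a)) in H by ring.
    rewrite Rabs_mult, (Rabs_right K), Rabs_minus_sym in H by lra.
    replace (0 - 0) with 0 in H by ring. rewrite Rabs_R0 in H.
    rewrite Rabs_minus_sym, (Rabs_minus_sym a b). lra.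
  - intros x. specialize (Hb x). unfold Rmax; destruct (Rle_dec 0 (1 - K * psi x)); nra.
  - intros x. unfold Rmax; destruct (Rle_dec 0 (1 - K * psi x)); split; intros; lra.
Qed.

Lemma closure_ge (P : set X) (h : X -> R) (c : R) x :
  continuous_R T h -> closure T (fun z => P z /\ c <= h z) x -> c <= h x.
Proof.
  intros Hh Hcl. apply Rnot_lt_le. intros Hlt.
  destruct (Hcl (fun z => h z < c)) as [y [Hy1 [_ Hy2]]]; auto.
  - apply (Hh (fun s => s < c)). apply R_open_lt.
  - lra.
Qed.

Lemma open_finite_inter (W : nat -> set X) (N : nat) :
  (forall n, is_open T (W n)) -> is_open T (fun x => forall n, (n < N)%nat -> W n x).
Proof.
  intros HW. induction N.
  - apply open_ext with (A := fun _ => True); [apply open_full|]. intros x; split; auto. intros _ n Hn; lia.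
  - apply open_ext with (A := fun x => (forall n, (n < N)%nat -> W n x) /\ W N x).
    + apply open_inter; auto.
    + intros x; split.
      * intros [H1 H2] n Hn. destruct (Nat.eq_dec n N) as [->|]; auto. apply H1; lia.
      * intros H; split; auto.
Qed.

Lemma fc_countable_inter (G : nat -> set X) : (forall n, func_closed T (G n)) ->
  func_closed T (fun x => forall n, G n x).
Proof.
  intros HG.
  pose (p := fun n => proj1_sig (constructive_indefinite_description _ (HG n))).
  assert (Hp : forall n, cont01 T (p n) /\ forall x, G n x <-> p n x = 0).
  { intros n. exact (proj2_sig (constructive_indefinite_description _ (HG n))). }
  exists (fun x => sup01 (fun n => Rmin (p n x) (w n))). split; [split|].
  - apply cont_local. intros x e He.
    destruct (w_small (e/2)) as [N HN]; [lra|].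
    exists (fun z => forall n, (n < N)%nat -> Rabs (p n z - p n x) < e / 2).
    split; [|split].
    + apply (open_finite_inter (fun n z => Rabs (p n z - p n x) < e / 2)).
      intros n. destruct (Hp n) as [[Hc _] _]. apply (Hc (fun s => Rabs (s - p n x) < e/2)).
      apply R_open_ball.
    + intros n _. replace (p n x - p n x) with 0 by ring. rewrite Rabs_R0; lra.
    + intros z Hz.
      assert (Rabs (sup01 (fun n => Rmin (p n z) (w n)) - sup01 (fun n => Rmin (p n x) (w n))) <= e / 2); [|lra].
      apply sup01_lip_abs; [lra|]. intros n.
      destruct (Nat.lt_ge_cases n N) as [Hn|Hn].
      * pose proof (Rmin_lip (p n z) (w n) (p n x) (w n)). specialize (Hz n Hn).
        replace (w n - w n) with 0 in H by ring. rewrite Rabs_R0 in H. lra.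
      * assert (w n <= w N) by (apply w_mono; lia).
        destruct (Hp n) as [[_ Hb] _]. pose proof (Hb z); pose proof (Hb x). pose proof (w_pos n).
        apply Rabs_le. unfold Rmin; destruct (Rle_dec (p n z) (w n)); destruct (Rle_dec (p n x) (w n)); split; lra.
  - intros x. apply sup01_bounds.
  - intros x. split.
    + intros H. apply Rle_antisym; [|apply sup01_bounds].
      apply sup01_lub; [lra|]. intros n. rewrite (proj1 (proj2 (Hp n) x) (H n)).
      pose proof (w_pos n). unfold Rmin; repeat destruct Rle_dec; lra.
    + intros H n. apply (proj2 (proj2 (Hp n) x)).
      pose proof (sup01_ge (fun n => Rmin (p n x) (w n)) n). simpl in H0. rewrite H in H0.
      destruct (Hp n) as [[_ Hb] _]. pose proof (Hb x). pose proof (w_pos n). pose proof (w_le1 n).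
      unfold Rmin in H0; repeat destruct Rle_dec in H0; lra.
Qed.

End FC.

Lemma cont_comp_map {X Y} (TX : Topology X) (TY : Topology Y) (F : X -> Y) (g : Y -> R) :
  continuous TX TY F -> continuous_R TY g -> continuous_R TX (fun x => g (F x)).
Proof. intros HF Hg V HV. apply (HF (fun y => V (g y))). apply Hg; auto. Qed.
Definition sfd_data {X I : Type} (T : Topology X) (A : I -> set X) (c : I -> nat) (psi : I -> X -> R) : Prop :=
  (forall i, cont01 T (psi i)) /\
  (forall n x, exists W, is_open T W /\ W x /\ forall i j, c i = n -> c j = n ->
      (exists y, W y /\ psi i y <> 0) -> (exists y, W y /\ psi j y <> 0) -> i = j) /\
  (forall i x, closure T (A i) x -> psi i x <> 0).

Lemma sigma_sfd_unfold {X I : Type} (T : Topology X) (A : I -> set X) :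
  sigma_sfd T A -> exists c psi, sfd_data T A c psi.
Proof.
  intros [c Hc].
  pose (Un := fun n => proj1_sig (constructive_indefinite_description _ (Hc n))).
  assert (HUn : forall n, (forall s, func_open T (Un n s)) /\ discrete_family T (Un n) /\
            forall s x, closure T (A (proj1_sig s)) x -> Un n s x).
  { intros n. exact (proj2_sig (constructive_indefinite_description _ (Hc n))). }
  pose (U := fun i => Un (c i) (exist (fun i' => c i' = c i) i eq_refl)).
  assert (Htr : forall i n (e : c i = n), Un n (exist _ i e) = U i).
  { intros i n e. destruct e. reflexivity. }
  assert (Hfo : forall i, func_open T (U i)).
  { intros i. apply (proj1 (HUn (c i))). }
  pose (psi := fun i => proj1_sig (constructive_indefinite_description _ (Hfo i))).
  assert (Hpsi : forall i, cont01 T (psi i) /\ forall x, U i x <-> psi i x <> 0).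
  { intros i. exact (proj2_sig (constructive_indefinite_description _ (Hfo i))). }
  exists c, psi. split; [|split].
  - intros i; apply Hpsi.
  - intros n x. destruct (HUn n) as [_ [Hd _]]. destruct (Hd x) as [W [HW [Wx HWd]]].
    exists W; repeat split; auto.
    intros i j ei ej [y [Wy Hy]] [y' [Wy' Hy']].
    assert (exist (fun i' => c i' = n) i ei = exist _ j ej).
    { apply HWd.
      - exists y; split; auto. rewrite Htr. apply Hpsi; auto.
      - exists y'; split; auto. rewrite Htr. apply Hpsi; auto. }
    exact (f_equal (@proj1_sig _ _) H).
  - intros i x Hcl. apply Hpsi. destruct (HUn (c i)) as [_ [_ Hcl']].
    exact (Hcl' (exist _ i eq_refl) x Hcl).
Qed.

Lemma sigma_sfd_fold {X I : Type} (T : Topology X) (A : I -> set X) c psi :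
  sfd_data T A c psi -> sigma_sfd T A.
Proof.
  intros [H1 [H2 H3]]. exists c. intros n.
  exists (fun s x => psi (proj1_sig s) x <> 0). split; [|split].
  - intros s. exists (psi (proj1_sig s)). split; auto. intros x; tauto.
  - intros x. destruct (H2 n x) as [W [HW [Wx HWd]]]. exists W; repeat split; auto.
    intros [i ei] [j ej] Hi Hj. simpl in *.
    assert (i = j) by (apply (HWd i j ei ej Hi Hj)). subst j.
    f_equal. apply proof_irrelevance.
  - intros [i ei] x Hcl. simpl in *. apply H3; auto.
Qed.
Lemma sub_closure {X} (T : Topology X) (A : set X) x : A x -> closure T A x.
Proof. intros Ax W _ Wx. exists x; auto. Qed.

Lemma cont_clip {X} (T : Topology X) (h : X -> R) (K : R) : 0 < K ->
  continuous_R T h -> continuous_R T (fun x => Rmax 0 (1 - K * h x)).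
Proof.
  intros HK Hc.
  apply (cont_comp1 T h (fun a => Rmax 0 (1 - K * a)) K); auto.
  intros a b. pose proof (Rmax_lip 0 (1 - K * a) 0 (1 - K * b)).
  replace (1 - K * a - (1 - K * b)) with (K * (b - a)) in H by ring.
  rewrite Rabs_mult, (Rabs_right K) in H by lra.
  replace (0 - 0) with 0 in H by ring. rewrite Rabs_R0 in H.
  rewrite (Rabs_minus_sym a b). lra.
Qed.

Lemma thmA {X Y} (TX : Topology X) (TY : Topology Y) (f : X -> Y) :
  SigmaF0star TX TY f -> K1 TX TY f.
Proof.
  intros [I [B [Hs [Hb Hfc]]]].
  destruct (sigma_sfd_unfold _ _ Hs) as [c [psi [Hp1 [Hp2 Hp3]]]].
  pose (phiB := fun i => proj1_sig (constructive_indefinite_description _ (Hfc i))).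
  assert (HphiB : forall i, cont01 TX (phiB i) /\ forall x, B i x <-> phiB i x = 0).
  { intros i. exact (proj2_sig (constructive_indefinite_description _ (Hfc i))). }
  intros V HV.
  pose (Good := fun i => forall z, B i z -> V (f z)).
  exists (fun N x => exists i, c i = fst (Cantor.of_nat N) /\ Good i /\ B i x /\
                        1 <= INR (S (snd (Cantor.of_nat N))) * psi i x).
  split.
  - intros N. set (n := fst (Cantor.of_nat N)). set (K := INR (S (snd (Cantor.of_nat N)))).
    assert (HK : 0 < K) by apply INRS_pos.
    pose (G := fun i x => Rmax (phiB i x) (Rmax 0 (1 - K * psi i x))).
    assert (Gc : forall i, continuous_R TX (G i)).
    { intros i. apply (cont_comp2 TX _ _ Rmax 1); [lra|apply Rmax_lip|apply HphiB|].
      apply cont_clip; auto; apply Hp1. }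
    assert (Gb : forall i x, 0 <= G i x <= 1).
    { intros i x. destruct (HphiB i) as [[_ H1] _]. destruct (Hp1 i) as [_ H2].
      specialize (H1 x); specialize (H2 x). unfold G, Rmax; repeat destruct Rle_dec; nra. }
    assert (G1 : forall i x, psi i x = 0 -> G i x = 1).
    { intros i x H. destruct (HphiB i) as [[_ H1] _]. specialize (H1 x).
      unfold G; rewrite H. unfold Rmax; repeat destruct Rle_dec; lra. }
    assert (G0 : forall i x, G i x = 0 <-> B i x /\ 1 <= K * psi i x).
    { intros i x. destruct (HphiB i) as [[_ H1] H3]. specialize (H1 x). rewrite H3.
      unfold G, Rmax; repeat destruct Rle_dec; split; intros; lra. }
    pose (Phi := fun x => inf01 (fun j : {i | c i = n /\ Good i} => G (proj1_sig j) x)).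
    assert (Hloc : forall x, exists W, is_open TX W /\ W x /\
       ((exists j0 : {i | c i = n /\ Good i}, forall z, W z -> Phi z = G (proj1_sig j0) z) \/
        (forall z, W z -> Phi z = 1))).
    { intros x. destruct (Hp2 n x) as [W [HW [Wx HWd]]]. exists W; split; auto; split; auto.
      destruct (classic (exists j0 : {i | c i = n /\ Good i}, exists y, W y /\ psi (proj1_sig j0) y <> 0))
        as [[j0 Hj0]|Hn].
      - left. exists j0. intros z Wz. unfold Phi. apply (inf01_single (fun j : {i | c i = n /\ Good i} => G (proj1_sig j) z) j0); auto.
        intros j Hj. apply G1. apply NNPP; intros Hz.
        apply Hj. destruct j as [i [ci gi]]. destruct j0 as [i0 [ci0 gi0]]. simpl in *.
        assert (i = i0) by (apply (HWd i i0 ci ci0); eauto). subst i0.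
        f_equal. apply proof_irrelevance.
      - right. intros z Wz. unfold Phi. apply inf01_all1. intros j. apply G1.
        apply NNPP; intros Hz. apply Hn. exists j, z; auto. }
    exists Phi. split; [split|].
    + apply cont_agree. intros x. destruct (Hloc x) as [W [HW [Wx [[j0 Hj0]|H1]]]].
      * exists W, (G (proj1_sig j0)); auto.
      * exists W, (fun _ => 1). repeat split; auto. apply cont_const.
    + intros x; split; [apply inf01_ge0|apply inf01_le1].
    + intros x. split.
      * intros [i [ci [gi [Bi Hi]]]]. apply Rle_antisym; [|apply inf01_ge0].
        pose proof (inf01_le (fun j : {i | c i = n /\ Good i} => G (proj1_sig j) x) (exist _ i (conj ci gi))).
        simpl in H. assert (G i x = 0) by (apply G0; auto). rewrite H0 in H.
        rewrite Rmax_left in H by lra. exact H.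
      * intros H0. destruct (Hloc x) as [W [HW [Wx [[j0 Hj0]|H1]]]].
        -- rewrite (Hj0 x Wx) in H0. apply G0 in H0. destruct j0 as [i [ci gi]].
           exists i; simpl in *; tauto.
        -- rewrite (H1 x Wx) in H0. lra.
  - intros x. split.
    + intros Hv. destruct (proj1 (Hb V HV x) Hv) as [i [Bi Gi]].
      assert (Hpos : 0 < psi i x).
      { pose proof (Hp3 i x (sub_closure _ _ _ Bi)). destruct (Hp1 i) as [_ Hb1].
        specialize (Hb1 x). lra. }
      destruct (w_arch _ Hpos) as [k Hk].
      exists (Cantor.to_nat (c i, k)). rewrite Cantor.cancel_of_to. simpl.
      exists i; repeat split; auto.
    + intros [N [i [_ [Gi [Bi _]]]]]. apply Gi; auto.
Qed.

Lemma thmB {X Y} (TX : Topology X) (TY : Topology Y) (f : X -> Y) :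
  SigmaF0star TX TY f -> SigmaF TX TY f.
Proof. intros [I [B [H1 [H2 _]]]]. exists I, B; auto. Qed.
Lemma w_le_iff m t : w m <= t <-> 1 <= INR (S m) * t.
Proof.
  unfold w. pose proof (INRS_pos m). split; intros H1.
  - apply (Rmult_le_compat_l (INR (S m))) in H1; [|lra]. rewrite Rinv_r in H1 by lra. lra.
  - apply (Rmult_le_reg_l (INR (S m))); auto. rewrite Rinv_r by lra. lra.
Qed.

Lemma fc_ext {X} (T : Topology X) (A B : set X) : func_closed T A -> (forall x, A x <-> B x) -> func_closed T B.
Proof. intros H E. rewrite <- (set_ext A B E). exact H. Qed.

Lemma abs_le_inv x a : Rabs x <= a -> - a <= x <= a.
Proof. intros H. pose proof (Rle_abs x). pose proof (Rle_abs (- x)). rewrite Rabs_Ropp in H1. lra. Qed.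

Section Metric.
Context {Y : Type} (TY : Topology Y) (d : Y -> Y -> R)
  (Hd0 : forall x y, d x y = 0 <-> x = y)
  (Hsym : forall x y, d x y = d y x)
  (Htri : forall x y z, d x z <= d x y + d y z)
  (Hop : forall U, is_open TY U <->
       forall y, U y -> exists eps, 0 < eps /\ forall z, d y z < eps -> U z).

Lemma d_refl x : d x x = 0.
Proof. apply Hd0; auto. Qed.

Lemma d_nonneg x y : 0 <= d x y.
Proof. pose proof (Htri x y x). rewrite d_refl, (Hsym y x) in H. lra. Qed.

Lemma ball_open y r : is_open TY (fun z => d y z < r).
Proof.
  apply Hop. intros z Hz. exists (r - d y z); split; [lra|].
  intros u Hu. pose proof (Htri y z u). lra.
Qed.

Lemma open_ball V y : is_open TY V -> V y -> exists e, 0 < e /\ forall z, d y z < e -> V z.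
Proof. intros HV Vy. apply (proj1 (Hop V) HV y Vy). Qed.

Lemma lip_cont (g : Y -> R) (K : R) : 0 < K ->
  (forall a b, Rabs (g a - g b) <= K * d a b) -> continuous_R TY g.
Proof.
  intros HK Hg. apply cont_local. intros y e He.
  exists (fun z => d y z < e / K). split; [apply ball_open|split].
  - rewrite d_refl. apply Rdiv_lt_0_compat; auto.
  - intros z Hz. specialize (Hg z y). rewrite Hsym in Hg.
    assert (K * d y z < K * (e / K)) by (apply Rmult_lt_compat_l; auto).
    replace (K * (e / K)) with e in H by (field; lra). lra.
Qed.

Definition distS (y : Y) (A : set Y) : R := inf01 (fun a : {a | A a} => d y (proj1_sig a)).

Lemma ds_bounds y A : 0 <= distS y A <= 1.
Proof. split; [apply inf01_ge0|apply inf01_le1]. Qed.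

Lemma ds_lip y y' A : Rabs (distS y A - distS y' A) <= d y y'.
Proof.
  apply inf01_lip_abs; [apply d_nonneg|]. intros [a Ha]; simpl.
  apply Rabs_le. pose proof (Htri y y' a). pose proof (Htri y' y a). rewrite (Hsym y' y) in H0. split; lra.
Qed.

Lemma ds_cont A : continuous_R TY (fun y => distS y A).
Proof. apply (lip_cont _ 1); [lra|]. intros a b. rewrite Rmult_1_l. apply ds_lip. Qed.

Lemma ds_le y A a : A a -> distS y A <= d y a.
Proof.
  intros Ha. pose proof (inf01_le (fun a : {a | A a} => d y (proj1_sig a)) (exist _ a Ha)).
  simpl in H. rewrite Rmax_right in H by apply d_nonneg. exact H.
Qed.

Lemma ds_zero y A : A y -> distS y A = 0.
Proof. intros Ha. pose proof (ds_le y A y Ha). rewrite d_refl in H. pose proof (ds_bounds y A). lra. Qed.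

Lemma ds_lt y A t : distS y A < t -> t <= 1 -> exists a, A a /\ d y a < t.
Proof.
  intros H1 H2. destruct (inf01_lt _ t H1 H2) as [[a Ha] Hlt]. exists a; auto.
Qed.

Lemma ds_ge y A t : t <= 1 -> (forall a, A a -> t <= d y a) -> t <= distS y A.
Proof.
  intros H1 H2. apply inf01_glb; auto. intros [a Ha]; simpl.
  pose proof (H2 a Ha). pose proof (Rmax_r 0 (d y a)). lra.
Qed.

Lemma pl_ball {X} (fn : nat -> X -> Y) f : pointwise_limit TY fn f ->
  forall x e, 0 < e -> exists N, forall n, (N <= n)%nat -> d (f x) (fn n x) < e.
Proof.
  intros Hl x e He. apply (Hl x (fun z => d (f x) z < e)); [apply ball_open|].
  rewrite d_refl; auto.
Qed.

Lemma pl_closed {X} (fn : nat -> X -> Y) f y r k z : pointwise_limit TY fn f ->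
  (forall n, (k <= n)%nat -> d y (fn n z) < r) -> d y (f z) <= r.
Proof.
  intros Hl H. apply Rnot_lt_le. intros Hlt.
  destruct (pl_ball fn f Hl z (d y (f z) - r)) as [N HN]; [lra|].
  specialize (HN (Nat.max k N) ltac:(lia)). specialize (H (Nat.max k N) ltac:(lia)).
  pose proof (Htri y (fn (Nat.max k N) z) (f z)). rewrite (Hsym (fn (Nat.max k N) z) (f z)) in H0. lra.
Qed.

Lemma thmD {X} (TX : Topology X) (f : X -> Y) : Baire1 TX TY f -> K1 TX TY f.
Proof.
  intros [fn [Hc Hl]] V HV.
  pose (dl := fun y => distS y (fun a => ~ V a)).
  exists (fun N x => forall n, (snd (Cantor.of_nat N) <= n)%nat ->
             1 <= INR (S (fst (Cantor.of_nat N))) * dl (fn n x)).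
  split.
  - intros N. set (m := fst (Cantor.of_nat N)). set (k := snd (Cantor.of_nat N)).
    apply fc_ext with (A := fun x => forall n', (fun n' x => 1 <= INR (S m) * dl (fn (k + n')%nat x)) n' x).
    + apply fc_countable_inter. intros n'. apply fc_ge; [apply INRS_pos|]. split.
      * apply (cont_comp_map TX TY (fn (k + n')%nat) dl); auto. apply ds_cont.
      * intros x; apply ds_bounds.
    + intros x; split.
      * intros H n Hn. replace n with (k + (n - k))%nat by lia. apply H.
      * intros H n'. apply H. lia.
  - intros x. split.
    + intros Hv. destruct (open_ball V (f x) HV Hv) as [e [He HVe]].
      set (e' := Rmin e 1).
      assert (He' : 0 < e') by (unfold e', Rmin; destruct Rle_dec; lra).
      assert (Hd : e' <= dl (f x)).
      { apply ds_ge; [unfold e', Rmin; destruct Rle_dec; lra|].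
        intros a Ha. apply Rnot_lt_le; intros Hlt. apply Ha, HVe.
        unfold e', Rmin in Hlt; destruct Rle_dec in Hlt; lra. }
      destruct (w_small (e' / 2)) as [m Hm]; [lra|].
      destruct (pl_ball fn f Hl x (e'/2)) as [k Hk]; [lra|].
      exists (Cantor.to_nat (m, k)). rewrite Cantor.cancel_of_to. simpl.
      intros n Hn. apply w_le_iff. specialize (Hk n Hn).
      pose proof (ds_lip (f x) (fn n x) (fun a => ~ V a)).
      apply abs_le_inv in H. unfold dl in *. lra.
    + intros [N HN]. apply NNPP. intros Hnv.
      set (m := fst (Cantor.of_nat N)) in HN. set (k := snd (Cantor.of_nat N)) in HN.
      destruct (pl_ball fn f Hl x (w m)) as [N0 HN0]; [apply w_pos|].
      specialize (HN (Nat.max k N0) ltac:(lia)). specialize (HN0 (Nat.max k N0) ltac:(lia)).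
      apply w_le_iff in HN.
      pose proof (ds_le (fn (Nat.max k N0) x) (fun a => ~ V a) (f x) Hnv).
      rewrite Hsym in H. unfold dl in *. lra.
Qed.
Lemma to_nat_inj (a b : nat * nat) : Cantor.to_nat a = Cantor.to_nat b -> a = b.
Proof. intros H. rewrite <- (Cantor.cancel_of_to a), <- (Cantor.cancel_of_to b), H. reflexivity. Qed.

Lemma pair_inj {A B : Type} (a a' : A) (b b' : B) : (a, b) = (a', b') -> a = a' /\ b = b'.
Proof. intros H. inversion H; auto. Qed.

Lemma cont_scale {X} (T : Topology X) (h : X -> R) K : 0 < K -> continuous_R T h ->
  continuous_R T (fun x => K * h x).
Proof.
  intros HK Hh. apply (cont_comp1 T h (fun a => K * a) K); auto.
  intros a b. replace (K * a - K * b) with (K * (a - b)) by ring.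
  rewrite Rabs_mult, (Rabs_right K) by lra. lra.
Qed.

Lemma thmC {X} (TX : Topology X) (f : X -> Y) :
  K1 TX TY f -> SigmaF TX TY f -> SigmaF0star TX TY f.
Proof.
  intros HK [I [B [Hs Hb]]].
  destruct (sigma_sfd_unfold _ _ Hs) as [c [psi [Hp1 [Hp2 Hp3]]]].
  pose (O := fun (p : I * nat) y => exists b, B (fst p) b /\ d (f b) y < w (snd p)).
  assert (Oopen : forall p, is_open TY (O p)).
  { intros p. apply Hop. intros y [b [Bb Hb1]]. exists (w (snd p) - d (f b) y); split; [lra|].
    intros z Hz. exists b; split; auto. pose proof (Htri (f b) y z). lra. }
  pose (Fp := fun p => proj1_sig (constructive_indefinite_description _ (HK (O p) (Oopen p)))).
  assert (HFp : forall p, (forall k, func_closed TX (Fp p k)) /\ forall x, O p (f x) <-> exists k, Fp p k x).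
  { intros p. exact (proj2_sig (constructive_indefinite_description _ (HK (O p) (Oopen p)))). }
  exists ((I * nat) * (nat * nat))%type.
  exists (fun q x => Fp (fst q) (snd (snd q)) x /\ 1 <= INR (S (fst (snd q))) * psi (fst (fst q)) x).
  split; [|split].
  - apply (sigma_sfd_fold _ _ (fun q => Cantor.to_nat (c (fst (fst q)), Cantor.to_nat (snd (fst q), Cantor.to_nat (fst (snd q), snd (snd q)))))
                             (fun q => psi (fst (fst q)))).
    split; [|split].
    + intros q; apply Hp1.
    + intros n x. destruct (Hp2 (fst (Cantor.of_nat n)) x) as [W [HW [Wx HWd]]].
      exists W; repeat split; auto.
      intros [[i1 m1] [k1 l1]] [[i2 m2] [k2 l2]] E1 E2 H1 H2; cbn [fst snd] in *.
      rewrite <- E2 in E1. apply to_nat_inj in E1. destruct (pair_inj _ _ _ _ E1) as [E4 E3].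
      apply to_nat_inj in E3. destruct (pair_inj _ _ _ _ E3) as [E6 E5].
      apply to_nat_inj in E5. destruct (pair_inj _ _ _ _ E5) as [E8 E7]. subst.
      assert (i1 = i2).
      { apply (HWd i1 i2); auto.
        - rewrite Cantor.cancel_of_to; cbn [fst]; congruence.
        - rewrite Cantor.cancel_of_to; cbn [fst]; congruence. }
      subst; reflexivity.
    + intros [[i m] [k l]] x Hcl; simpl in *.
      assert (1 <= INR (S k) * psi i x).
      { apply (closure_ge TX (Fp (i, m) l) (fun x => INR (S k) * psi i x) 1 x); auto.
        apply cont_scale; [apply INRS_pos|apply Hp1]. }
      intros E; rewrite E in H; lra.
  - intros V HV x. split.
    + intros Hv. destruct (open_ball V (f x) HV Hv) as [e [He HVe]].
      destruct (w_small (e / 2)) as [m Hm]; [lra|].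
      destruct (proj1 (Hb (fun y => d (f x) y < e / 2) (ball_open _ _) x)) as [i [Bi Hi]].
      { rewrite d_refl; lra. }
      assert (HO : O (i, m) (f x)).
      { exists x; split; auto. simpl. rewrite d_refl. apply w_pos. }
      destruct (proj1 (proj2 (HFp (i, m)) x) HO) as [l Hl].
      assert (Hpos : 0 < psi i x).
      { pose proof (Hp3 i x (sub_closure _ _ _ Bi)). destruct (Hp1 i) as [_ Hb1].
        specialize (Hb1 x). lra. }
      destruct (w_arch _ Hpos) as [k Hk].
      exists ((i, m), (k, l)); simpl. split; [split; auto|].
      intros z [Hz _].
      assert (Hz' : O (i, m) (f z)) by (apply (proj2 (proj2 (HFp (i, m)) z)); exists l; exact Hz).
      destruct Hz' as [b [Bb Hbz]]. simpl in *. apply HVe.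
      pose proof (Hi b Bb). pose proof (Htri (f x) (f b) (f z)). lra.
    + intros [q [Hq Hz]]. apply Hz; auto.
  - intros [[i m] [k l]]; simpl. apply fc_inter.
    + apply (HFp (i, m)).
    + apply fc_ge; [apply INRS_pos|apply Hp1].
Qed.
Section Stone.
Variable (Rw : Y -> Y -> Prop)
  (Hanti : forall x y, Rw x y -> Rw y x -> x = y)
  (Hmin : forall P : Y -> Prop, (exists x, P x) -> exists z, P z /\ forall x, P x -> Rw z x).

Lemma cm_ex m p : exists c, d p c < w m /\ forall c', d p c' < w m -> Rw c c'.
Proof. apply Hmin. exists p. rewrite d_refl. apply w_pos. Qed.

Definition cm m p : Y := proj1_sig (constructive_indefinite_description _ (cm_ex m p)).
Lemma cm_spec m p : d p (cm m p) < w m /\ forall c', d p c' < w m -> Rw (cm m p) c'.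
Proof. exact (proj2_sig (constructive_indefinite_description _ (cm_ex m p))). Qed.

Definition Dset m n c : set Y := fun y => exists p, cm m p = c /\
   (forall z, d p z < 3 * w n -> d c z < w m) /\ d p y < w n.

Lemma sep1 m n c1 c2 y1 y2 : c1 <> c2 -> Rw c1 c2 -> Dset m n c1 y1 -> Dset m n c2 y2 -> w n <= d y1 y2.
Proof.
  intros Hne Hr [p1 [E1 [C1 D1]]] [p2 [E2 [C2 D2]]].
  assert (H1 : w m <= d p2 c1).
  { apply Rnot_lt_le. intros Hlt. apply Hne. apply Hanti; auto.
    rewrite <- E2. apply (proj2 (cm_spec m p2)). auto. }
  assert (H2 : 3 * w n <= d p1 p2).
  { apply Rnot_lt_le. intros Hlt. specialize (C1 p2 Hlt). rewrite Hsym in C1. lra. }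
  pose proof (Htri p1 y1 p2). pose proof (Htri y1 y2 p2).
  rewrite (Hsym y2 p2) in H0. lra.
Qed.

Lemma sep m n c1 c2 y1 y2 : c1 <> c2 -> Dset m n c1 y1 -> Dset m n c2 y2 -> w n <= d y1 y2.
Proof.
  intros Hne H1 H2.
  destruct (Hmin (fun c => c = c1 \/ c = c2)) as [z [[->| ->] Hz]]; [exists c1; auto| |].
  - apply (sep1 m n c1 c2); auto.
  - rewrite Hsym. apply (sep1 m n c2 c1); auto.
Qed.

Lemma cover y rho : 0 < rho -> exists m n c, (forall z, d y z < w n -> Dset m n c z) /\
   (forall z, Dset m n c z -> d y z < rho).
Proof.
  intros Hr. destruct (w_small (rho / 2)) as [m Hm]; [lra|].
  set (c := cm m y). destruct (cm_spec m y) as [Hc _]. fold c in Hc.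
  set (g := w m - d y c).
  destruct (w_small (g / 3)) as [n Hn]; [unfold g; lra|].
  exists m, n, c. split.
  - intros z Hz. exists y; split; [reflexivity|split; auto].
    intros u Hu. pose proof (Htri c y u). rewrite (Hsym c y) in H. unfold g in Hn. lra.
  - intros z [p [E [C Dz]]]. assert (d c z < w m) by (apply C; pose proof (w_pos n); lra).
    pose proof (Htri y c z). lra.
Qed.

Lemma thmE {X} (TX : Topology X) (f : X -> Y) : Baire1 TX TY f -> SigmaF TX TY f.
Proof.
  intros [fn [Hc Hl]].
  pose (Psi := fun m n c y => Rmax 0 (1 - (6 * INR (S n)) * distS y (Dset m n c))).
  assert (HK : forall n, 0 < 6 * INR (S n)) by (intros n; pose proof (INRS_pos n); lra).
  assert (Psic : forall m n c, continuous_R TY (Psi m n c)).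
  { intros m n c. apply cont_clip; auto. apply ds_cont. }
  assert (Psib : forall m n c y, 0 <= Psi m n c y <= 1).
  { intros m n c y. pose proof (ds_bounds y (Dset m n c)). pose proof (HK n).
    unfold Psi, Rmax; destruct Rle_dec; nra. }
  assert (Psi1 : forall m n c y, Dset m n c y -> Psi m n c y = 1).
  { intros m n c y Hy. unfold Psi. rewrite ds_zero by auto. rewrite Rmult_0_r, Rminus_0_r, Rmax_right; lra. }
  assert (Psi0 : forall m n c y, Psi m n c y <> 0 -> exists a, Dset m n c a /\ d y a < w n / 6).
  { intros m n c y Hy. apply ds_lt.
    - unfold Psi, Rmax in Hy. destruct Rle_dec in Hy; [|lra].
      assert ((6 * INR (S n)) * distS y (Dset m n c) < 1) by lra.
      unfold w. pose proof (INRS_pos n).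
      apply (Rmult_lt_reg_l (6 * INR (S n))); auto. field_simplify; lra.
    - pose proof (w_le1 n). lra. }
  exists (((nat * nat) * Y) * nat)%type.
  exists (fun q x => forall j, (snd q <= j)%nat -> Dset (fst (fst (fst q))) (snd (fst (fst q))) (snd (fst q)) (fn j x)).
  split.
  - apply (sigma_sfd_fold _ _ (fun q => Cantor.to_nat (fst (fst (fst q)), Cantor.to_nat (snd (fst (fst q)), snd q)))
            (fun q x => Psi (fst (fst (fst q))) (snd (fst (fst q))) (snd (fst q)) (fn (snd q) x))).
    split; [|split].
    + intros [[[m n] c] k]; cbn [fst snd]. split.
      * apply (cont_comp_map TX TY (fn k) (Psi m n c)); auto.
      * intros x; apply Psib.
    + intros n0 x.
      set (n := fst (Cantor.of_nat (snd (Cantor.of_nat n0)))).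
      set (k := snd (Cantor.of_nat (snd (Cantor.of_nat n0)))).
      exists (fun z => d (fn k x) (fn k z) < w n / 6). split; [|split].
      * apply (Hc k (fun y => d (fn k x) y < w n / 6)). apply ball_open.
      * rewrite d_refl. pose proof (w_pos n); lra.
      * intros [[[m1 n1] c1] k1] [[[m2 n2] c2] k2] E1 E2 [y1 [W1 H1]] [y2 [W2 H2]]; cbn [fst snd] in *.
        subst n0. unfold n, k in *. rewrite !Cantor.cancel_of_to in *. cbn [fst snd] in *.
        apply to_nat_inj in E2. destruct (pair_inj _ _ _ _ E2) as [E3 E4].
        apply to_nat_inj in E4. destruct (pair_inj _ _ _ _ E4) as [E5 E6]. subst.
        destruct (Psi0 _ _ _ _ H1) as [a1 [Da1 Ha1]].
        destruct (Psi0 _ _ _ _ H2) as [a2 [Da2 Ha2]].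
        destruct (classic (c1 = c2)) as [->|Hne]; [reflexivity|].
        exfalso. rewrite Cantor.cancel_of_to in W1, W2; cbn [fst snd] in W1, W2.
        pose proof (sep m1 n1 c1 c2 a1 a2 Hne Da1 Da2).
        pose proof (Htri a1 (fn k1 y1) a2). pose proof (Htri (fn k1 y1) (fn k1 x) a2).
        pose proof (Htri (fn k1 x) (fn k1 y2) a2).
        rewrite (Hsym a1 (fn k1 y1)) in H0. rewrite (Hsym (fn k1 y1) (fn k1 x)) in H3. pose proof (w_pos n1). lra.
    + intros [[[m n] c] k] x Hcl; cbn [fst snd] in *. intros E.
      destruct (Hcl (fun z => Psi m n c (fn k z) < 1)) as [y [Wy My]].
      * apply (cont_comp_map TX TY (fn k) (Psi m n c) (Hc k) (Psic m n c) (fun s => s < 1)). apply R_open_lt.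
      * rewrite E; lra.
      * rewrite (Psi1 m n c (fn k y)) in Wy; [lra|]. apply My; lia.
  - intros V HV x. split.
    + intros Hv. destruct (open_ball V (f x) HV Hv) as [e [He HVe]].
      destruct (cover (f x) (e / 2)) as [m [n [c [Hin Hout]]]]; [lra|].
      destruct (pl_ball fn f Hl x (w n)) as [k Hk]; [apply w_pos|].
      exists (((m, n), c), k); cbn [fst snd]. split.
      * intros j Hj. apply Hin, Hk; auto.
      * intros z Hz. apply HVe.
        assert (d (f x) (f z) <= e / 2); [|lra].
        apply (pl_closed fn f (f x) (e/2) k z Hl). intros j Hj. apply Hout, Hz; auto.
    + intros [q [Hq Hz]]. apply Hz; auto.
Qed.
End Stone.
End Metric.

From HB Require Import structures.
From mathcomp Require Import ssreflect ssrfun ssrbool eqtype boolp wochoice.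

Definition wrapT (T : Type) : Type := T.
HB.instance Definition _ (T : Type) := gen_eqMixin (wrapT T).

Lemma wo_exists (Y : Type) : exists R : Y -> Y -> Prop,
  (forall x y, R x y -> R y x -> x = y) /\
  (forall P : Y -> Prop, (exists x, P x) -> exists z, P z /\ forall x, P x -> R z x).
Proof.
have [R HR] := well_ordering_principle (wrapT Y).
have key : forall P : wrapT Y -> Prop, (exists x, P x) ->
   exists z, (P z /\ forall x, P x -> R z x) /\ forall w, (P w /\ forall x, P x -> R w x) -> z = w.
  move=> P [x Px].
  have ne : nonempty [pred z : wrapT Y | `[< P z >]].
    by exists x; rewrite inE; apply/asboolP.
  have [z [[Hz Hlb] Hu]] := HR _ ne.
  exists z; split.
    split; first by move: Hz; rewrite inE => /asboolP.
    by move=> w Pw; apply: Hlb; rewrite inE; apply/asboolP.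
  move=> w [Pw Hw]; apply: Hu; split; first by rewrite inE; apply/asboolP.
  by move=> v; rewrite inE => /asboolP Pv; apply: Hw.
have refl : forall x : wrapT Y, R x x.
  move=> x; have [z [[Hz Hlb] _]] := key (fun w => w = x) (ex_intro _ x erefl).
  by rewrite -{1}Hz; apply: Hlb.
exists (fun x y => R x y); split.
- move=> x y Rxy Ryx.
  have [z [_ Hu]] := key (fun w => w = x \/ w = y) (ex_intro _ x (or_introl erefl)).
  have e1 : z = x by apply: Hu; split; [left|move=> w [->|->]].
  have e2 : z = y by apply: Hu; split; [right|move=> w [->|->]].
  by rewrite -e1 -e2.
- move=> P hP; have [z [[Pz Hz] _]] := key P hP; by exists z.
Qed.



Theorem mainTheorem1 (X Y : Type) (TX : Topology X) (TY : Topology Y)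
  (HY : metrizable TY) :
  (forall f : X -> Y, Baire1 TX TY f -> SigmaF0star TX TY f) /\
  (forall f : X -> Y, SigmaF0star TX TY f <-> (K1 TX TY f /\ SigmaF TX TY f)).
Proof.
  destruct HY as [d [Hd0 [Hsym [Htri Hop]]]].
  destruct (wo_exists Y) as [Rw [Ha Hm]].
  split.
  - intros f Hf. apply (thmC TY d Hd0 Htri Hop TX f).
    + apply (thmD TY d Hd0 Hsym Htri Hop TX f Hf).
    + apply (thmE TY d Hd0 Hsym Htri Hop Rw Ha Hm TX f Hf).
  - intros f; split.
    + intros H; split; [apply thmA|apply thmB]; auto.
    + intros [H1 H2]. apply (thmC TY d Hd0 Htri Hop TX f H1 H2).
Qed.
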